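(* Let $q\ge2$, $n\ge1$, $P=3\lceil\log_q n+\log_q\log_q n\rceil+1$, and let $p$ be the smallest prime with $p>4n$. Let $d_1\in[0,2q-2]$, $d_2\in[0,p-1]$, $d_3\in[0,\lfloor\frac{(q-1)(P-1)}{3}\rfloor]$, and let $\mathcal{C}^2_{Aux}$ be the set of $\boldsymbol{x}\in\mathcal{ALL}(n,\frac{P-1}{3})$ such that $\mathrm{VT}^{(0)}(\boldsymbol{x})\equiv d_1\pmod{2q-1}$, $\mathrm{VT}^{(2)}(\boldsymbol{x})\equiv d_2\pmod p$, and $\mathrm{VT}^{(0)}(\mathcal{O}(\boldsymbol{x}))\equiv d_3\pmod{\lfloor\frac{(q-1)(P-1)}{3}\rfloor+1}$. Then for any distinct $\boldsymbol{x},\boldsymbol{y}\in\mathcal{C}^2_{Aux}$ with $d_H(\mathcal{R}(\boldsymbol{x}),\mathcal{R}(\boldsymbol{y}))=4$, there do NOT exist $\boldsymbol{u},\boldsymbol{w}\in\Sigma_q^{\ge0}$, $\boldsymbol{v}\in\Sigma_q^{\ge1}$, integers $t_1,t_2\ge1$ and symbols $a_1,b_1,a_2,b_2\in\Sigma_q$ with $a_1\ne b_1$, $a_2\ne b_2$, such that $\boldsymbol{x}=(\boldsymbol{u},\boldsymbol{\alpha}_{t_1}(a_1b_1),\boldsymbol{v},\boldsymbol{\alpha}_{t_2}(a_2b_2),\boldsymbol{w})$ and $\boldsymbol{y}=(\boldsymbol{u},\boldsymbol{\alpha}_{t_1}(b_1a_1),\boldsymbol{v},\boldsymbol{\alpha}_{t_2}(b_2a_2),\boldsymbol{w})$.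 Moreover, there exists a choice of $d_1,d_2,d_3$ such that $r(\mathcal{C}^2_{Aux})\le\log_qn+\log_q\log_qn+O(1)$ as $n\to\infty$.
   Context: $\Sigma_q=\{0,\dots,q-1\}$; $\Sigma_q^{\ge0}$ (resp. $\Sigma_q^{\ge1}$) is the set of finite (resp. nonempty finite) sequences over $\Sigma_q$; $(\cdot,\cdot)$ is concatenation. For $\boldsymbol{x}\in\Sigma_q^n$, $x[i]$ is its $i$-th entry, with $x[i]=0$ for $i\notin[1,n]$. $\mathrm{VT}^{(k)}(\boldsymbol{z})=\sum_i i^kz[i]$. $\mathcal{O}(\boldsymbol{x})=(x[1],x[3],\dots,x[2\lceil n/2\rceil-1])$ is the odd sequence. For distinct $a,b$, $\boldsymbol{\alpha}_t(ab)$ is the alternating sequence $abab\cdots$ of length $t$; a sequence is alternating if it has such a form. $\mathcal{ALL}(n,L)$ is the set of $\boldsymbol{x}\in\Sigma_q^n$ all of whose alternating substrings (contiguous blocks) have length at most $L$. $\mathcal{R}(\boldsymbol{x})$ is the length-$(n+1)$ vector whose $i$-th entry is the multiset $\{\{x[i-1],x[i]\}\}$; $d_H$ is Hamming distance. Redundancy: $r(\mathcal{C})=n-\log_q|\mathcal{C}|$. *)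

(* Defs.v *)
From Stdlib Require Import Reals ZArith.
From mathcomp Require Import all_boot.
Set Implicit Arguments. Unset Strict Implicit. Unset Printing Implicit Defensive.

Definition qary (q : nat) (x : seq nat) : bool := all (fun a => a < q) x.

Definition VT (k : nat) (z : seq nat) : nat :=
  \sum_(i < size z) (i.+1) ^ k * nth 0 z i.

(* odd sequence O(x) = (x[1], x[3], ..., x[2 ceil(n/2) - 1]) (1-indexed) *)
Definition oddseq (x : seq nat) : seq nat :=
  [seq nth 0 x (2 * i) | i <- iota 0 (uphalf (size x))].

Definition alpha (t a b : nat) : seq nat :=
  mkseq (fun i => if odd i then b else a) t.

Definition is_alt (q : nat) (s : seq nat) : bool :=
  has (fun a => has (fun b => (a != b) && (s == alpha (size s) a b)) (iota 0 q))
      (iota 0 q).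

Definition inALL (q n L : nat) (x : seq nat) : bool :=
  [&& size x == n, qary q x &
   all (fun i => all (fun j => is_alt q (drop i (take j x)) ==> (j - i <= L))
                     (iota 0 (size x).+1))
       (iota 0 (size x).+1)].

(* extended entry x[j] (1-indexed), with x[j] = 0 outside [1, n] *)
Definition xe (x : seq nat) (j : nat) : nat :=
  if j is j'.+1 then nth 0 x j' else 0.

(* a multiset {{a, b}} represented canonically as (min, max) *)
Definition mset2 (a b : nat) : nat * nat := (minn a b, maxn a b).

Definition Rvec (x : seq nat) : seq (nat * nat) :=
  mkseq (fun i => mset2 (xe x i) (xe x i.+1)) (size x).+1.

Definition dH (T : eqType) (s t : seq T) : nat :=
  count (fun p => p.1 != p.2) (zip s t) + (maxn (size s) (size t) - minn (size s) (size t)).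

Definition least_prime_gt (m p : nat) : Prop :=
  [/\ prime p, m < p & forall p', prime p' -> m < p' -> p <= p'].

Definition logq (q : nat) (x : R) : R := Rdiv (ln x) (ln (INR q)).
Definition ceilZ (x : R) : Z := Z.opp (Int_part (Ropp x)).

(* (P - 1)/3 = ceil(log_q n + log_q log_q n), with P = 3 ceil(...) + 1 *)
Definition Lpar (q n : nat) : nat :=
  Z.to_nat (ceilZ (Rplus (logq q (INR n)) (logq q (logq q (INR n))))).

Definition inC2Aux (q n p d1 d2 d3 : nat) (x : seq nat) : bool :=
  [&& inALL q n (Lpar q n) x,
      VT 0 x == d1 %[mod (2 * q - 1)],
      VT 2 x == d2 %[mod p] &
      VT 0 (oddseq x) == d3 %[mod ((q - 1) * Lpar q n).+1]].

Fixpoint words (q n : nat) : seq (seq nat) :=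
  if n is m.+1 then [seq a :: w | a <- iota 0 q, w <- words q m] else [:: [::]].

Definition cardC2Aux (q n p d1 d2 d3 : nat) : nat :=
  size (filter (inC2Aux q n p d1 d2 d3) (words q n)).

Definition redundancy (q n card : nat) : R := Rminus (INR n) (logq q (INR card)).

(* Main.v *)
Require Import Defs.
From Stdlib Require Import Reals ZArith Lia Lra.
From Stdlib Require Znumtheory.
From mathcomp Require Import all_boot.
From mathcomp Require Import zify.
Set Implicit Arguments. Unset Strict Implicit. Unset Printing Implicit Defensive.
Delimit Scope R_scope with RR.
Definition W (f : nat -> nat) (z : seq nat) : nat := \sum_(i < size z) f i * nth 0 z i.

Lemma W_cat f s t : W f (s ++ t) = W f s + W (fun i => f (size s + i)) t.
Proof.
rewrite /W size_cat big_split_ord /=; congr (_ + _); apply: eq_bigr => i _.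
- by rewrite nth_cat ltn_ord.
- by rewrite nth_cat /= ltnNge leq_addr /= addKn.
Qed.

Lemma W_rcons f s c : W f (rcons s c) = W f s + f (size s) * c.
Proof. by rewrite -cats1 W_cat /W big_ord1 addn0. Qed.

Fixpoint Zalt (g : nat -> Z) (t : nat) : Z :=
  match t with 0 => 0%Z | t'.+1 => (Zalt g t' + (if odd t' then - g t' else g t'))%Z end.

Lemma Zalt_ext g h t : (forall k, g k = h k) -> Zalt g t = Zalt h t.
Proof. by move=> E; elim: t => //= t ->; rewrite E. Qed.

Lemma size_alpha t a b : size (alpha t a b) = t.
Proof. exact: size_mkseq. Qed.

Lemma W_alpha g t a b :
  (Z.of_nat (W g (alpha t a b)) - Z.of_nat (W g (alpha t b a)) =
   (Z.of_nat a - Z.of_nat b) * Zalt (fun i => Z.of_nat (g i)) t)%Z.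
Proof.
elim: t => [|t IH]; first by rewrite /W !size_alpha !big_ord0 /= Z.mul_0_r.
rewrite /alpha !mkseqS -/(alpha t a b) -/(alpha t b a) !W_rcons !size_alpha /=.
case: (odd t); nia.
Qed.
Lemma W_diff f u v w t1 t2 a1 b1 a2 b2 :
  (Z.of_nat (W f (u ++ alpha t1 a1 b1 ++ v ++ alpha t2 a2 b2 ++ w)) -
   Z.of_nat (W f (u ++ alpha t1 b1 a1 ++ v ++ alpha t2 b2 a2 ++ w)) =
   (Z.of_nat a1 - Z.of_nat b1) * Zalt (fun k => Z.of_nat (f (size u + k)%N)) t1 +
   (Z.of_nat a2 - Z.of_nat b2) * Zalt (fun k => Z.of_nat (f (size u + t1 + size v + k)%N)) t2)%Z.
Proof.
rewrite !W_cat !size_alpha.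
have E1 := W_alpha (fun i => f (size u + i)) t1 a1 b1.
have E2 := W_alpha (fun i => f (size u + (t1 + (size v + i)))) t2 a2 b2.
rewrite (@Zalt_ext (fun k => Z.of_nat (f (size u + t1 + size v + k)))
   (fun i => Z.of_nat (f (size u + (t1 + (size v + i)))))); last by move=> k; rewrite !addnA.
lia.
Qed.

Lemma sum_even (F : nat -> nat) n :
  \sum_(i < n) (~~ odd i) * F i = \sum_(i < uphalf n) F (2 * i).
Proof.
elim: n => [|n IH]; first by rewrite !big_ord0.
rewrite big_ord_recr IH /=.
have h := odd_double_half n.
case: (boolP (odd n)) => on /=.
- by rewrite mul0n addn0 uphalf_half on.
- rewrite big_ord_recr /= mul1n uphalf_half (negbTE on) add0n.
  congr (_ + F _); move: h; rewrite (negbTE on) add0n => h; by rewrite mul2n.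
Qed.

Lemma VT_odd z : VT 0 (oddseq z) = W (fun i => ~~ odd i) z.
Proof.
rewrite /VT /W sum_even /oddseq size_map size_iota.
apply: eq_bigr => i _; rewrite expn0 mul1n (nth_map 0) ?size_iota ?ltn_ord //.
by rewrite nth_iota ?ltn_ord.
Qed.

Lemma Zalt_S2 g j : Zalt g (2 * j.+1)%N = (Zalt g (2 * j)%N + g (2 * j)%N - g (2 * j).+1%N)%Z.
Proof.
have -> : (2 * j.+1 = (2 * j).+2)%N by lia.
rewrite /= oddM /=; lia.
Qed.

Lemma Zalt_S1 g j : Zalt g (2 * j + 1)%N = (Zalt g (2 * j)%N + g (2 * j)%N)%Z.
Proof. by rewrite addn1 /= oddM. Qed.

Lemma alt_one s j :
  Zalt (fun k => Z.of_nat ((s + k).+1 ^ 0)%N) (2 * j) = 0%Z /\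
  Zalt (fun k => Z.of_nat ((s + k).+1 ^ 0)%N) (2 * j + 1) = 1%Z.
Proof.
suff H : Zalt (fun k => Z.of_nat ((s + k).+1 ^ 0)%N) (2 * j) = 0%Z.
  by split => //; rewrite Zalt_S1 H expn0.
elim: j => [|j IH] //; rewrite Zalt_S2 IH !expn0; lia.
Qed.

Lemma alt_oddw s j :
  Zalt (fun k => Z.of_nat (~~ odd (s + k)%N)) (2 * j) =
    (if odd s then - Z.of_nat j else Z.of_nat j)%Z /\
  Zalt (fun k => Z.of_nat (~~ odd (s + k)%N)) (2 * j + 1) =
    (if odd s then - Z.of_nat j else Z.of_nat j + 1)%Z.
Proof.
suff H : Zalt (fun k => Z.of_nat (~~ odd (s + k)%N)) (2 * j) =
    (if odd s then - Z.of_nat j else Z.of_nat j)%Z.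
  split => //; rewrite Zalt_S1 H oddD oddM /=; case: (odd s) => /=; lia.
elim: j => [|j IH]; first by case: (odd s).
rewrite Zalt_S2 IH !oddD ?oddS !oddM /=; case: (odd s) => /=; lia.
Qed.

Lemma alt_sq s j :
  Zalt (fun k => Z.of_nat ((s + k).+1 ^ 2)%N) (2 * j) =
    (- Z.of_nat j * (2 * Z.of_nat s + 2 * Z.of_nat j + 1))%Z /\
  Zalt (fun k => Z.of_nat ((s + k).+1 ^ 2)%N) (2 * j + 1) =
    (- Z.of_nat j * (2 * Z.of_nat s + 2 * Z.of_nat j + 1) +
     (Z.of_nat s + 2 * Z.of_nat j + 1) ^ 2)%Z.
Proof.
suff H : Zalt (fun k => Z.of_nat ((s + k).+1 ^ 2)%N) (2 * j) =
    (- Z.of_nat j * (2 * Z.of_nat s + 2 * Z.of_nat j + 1))%Z.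
  split => //; rewrite Zalt_S1 H; lia.
elim: j => [|j IH]; first by [].
rewrite Zalt_S2 IH; lia.
Qed.

Lemma mod_divZ (a b m d : nat) :
  (a == d %[mod m]) -> (b == d %[mod m]) -> (Z.of_nat m | Z.of_nat a - Z.of_nat b)%Z.
Proof.
move=> /eqP ha /eqP hb.
have ea := divn_eq a m; have eb := divn_eq b m.
exists (Z.of_nat (a %/ m) - Z.of_nat (b %/ m))%Z.
move: ea eb; rewrite ha hb.
move: (a %/ m) (b %/ m) (d %% m) => qa qb r -> ->; lia.
Qed.

Lemma small_div (m z : Z) : (m | z)%Z -> (- m < z < m)%Z -> z = 0%Z.
Proof.
case=> k -> [h1 h2]; have hm : (0 < m)%Z by lia.
have : (k = 0)%Z; last by move->.
case: (Z.lt_trichotomy k 0) => [hk|[//|hk]]; nia.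
Qed.

Lemma prime_Z (p : nat) (a b : Z) : prime p -> (Z.of_nat p | a * b)%Z ->
  a <> 0%Z -> (- Z.of_nat p < a < Z.of_nat p)%Z ->
  b <> 0%Z -> (- Z.of_nat p < b < Z.of_nat p)%Z -> False.
Proof.
move=> pp [k Hk] a0 ha b0 hb.
have E : (Z.abs_nat a * Z.abs_nat b = Z.abs_nat k * p)%N.
  have := f_equal Z.abs_nat Hk; rewrite !Zabs2Nat.inj_mul Zabs2Nat.id; lia.
have : p %| Z.abs_nat a * Z.abs_nat b by rewrite E dvdn_mull.
rewrite Euclid_dvdM // => /orP [] /dvdn_leq; lia.
Qed.
Lemma primeZ_div (p : nat) (a b : Z) : prime p -> (Z.of_nat p | a * b)%Z ->
  (Z.of_nat p | a)%Z \/ (Z.of_nat p | b)%Z.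
Proof.
move=> pp [k Hk].
have E : (Z.abs_nat a * Z.abs_nat b = Z.abs_nat k * p)%N.
  have := f_equal Z.abs_nat Hk; rewrite !Zabs2Nat.inj_mul Zabs2Nat.id; lia.
have : p %| Z.abs_nat a * Z.abs_nat b by rewrite E dvdn_mull.
have conv c : p %| Z.abs_nat c -> (Z.of_nat p | c)%Z.
  case/dvdnP => m hm; apply/Z.divide_abs_r; exists (Z.of_nat m); lia.
by rewrite Euclid_dvdM // => /orP [] /conv; [left|right].
Qed.

Lemma divZ_small (p : nat) (a : Z) : (Z.of_nat p | a)%Z -> a <> 0%Z ->
  (- Z.of_nat p < a < Z.of_nat p)%Z -> False.
Proof. by move=> h a0 ha; apply: a0; apply: small_div h ha. Qed.

Lemma par_split t : exists j, t = (2 * j)%N \/ t = (2 * j + 1)%N.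
Proof.
exists t./2; have := odd_double_half t; case: (odd t) => /= h; [right|left]; lia.
Qed.

Lemma div_eq (P X Y : Z) : (P | X)%Z -> X = Y -> (P | Y)%Z.
Proof. by move=> h <-. Qed.

Lemma core (p q L n s1 s2 t1 t2 : nat) (d1 d2 : Z) :
  prime p -> (4 * n < p)%N -> (q < n)%N -> (1 <= t1)%N -> (1 <= t2)%N ->
  (t1 <= L)%N -> (t2 <= L)%N -> (s1 + t1 < s2)%N -> (s2 + t2 <= n)%N ->
  d1 <> 0%Z -> (- Z.of_nat q < d1 < Z.of_nat q)%Z ->
  d2 <> 0%Z -> (- Z.of_nat q < d2 < Z.of_nat q)%Z ->
  (Z.of_nat (2 * q - 1) | d1 * Zalt (fun k => Z.of_nat ((s1 + k).+1 ^ 0)%N) t1 +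
                          d2 * Zalt (fun k => Z.of_nat ((s2 + k).+1 ^ 0)%N) t2)%Z ->
  (Z.of_nat ((q - 1) * L).+1 | d1 * Zalt (fun k => Z.of_nat (~~ odd (s1 + k)%N)) t1 +
                          d2 * Zalt (fun k => Z.of_nat (~~ odd (s2 + k)%N)) t2)%Z ->
  (Z.of_nat p | d1 * Zalt (fun k => Z.of_nat ((s1 + k).+1 ^ 2)%N) t1 +
                          d2 * Zalt (fun k => Z.of_nat ((s2 + k).+1 ^ 2)%N) t2)%Z ->
  False.
Proof.
move=> pp hp hq ht1 ht2 hL1 hL2 hs1 hs2 d10 hd1 d20 hd2 H0 HO H2.
have [j1 [E1|E1]] := par_split t1; have [j2 [E2|E2]] := par_split t2; subst t1 t2.
-
  rewrite (alt_oddw s1 j1).1 (alt_oddw s2 j2).1 in HO.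
  rewrite (alt_sq s1 j1).1 (alt_sq s2 j2).1 in H2.
  have b1 : (- (Z.of_nat q - 1) * Z.of_nat j1 <= d1 * Z.of_nat j1 <= (Z.of_nat q - 1) * Z.of_nat j1)%Z by nia.
  have b2 : (- (Z.of_nat q - 1) * Z.of_nat j2 <= d2 * Z.of_nat j2 <= (Z.of_nat q - 1) * Z.of_nat j2)%Z by nia.
  have b3 : ((Z.of_nat q - 1) * (Z.of_nat j1 + Z.of_nat j2) <= (Z.of_nat q - 1) * Z.of_nat L)%Z by nia.
  have HO' := small_div HO.
  have F : forall c, (Z.of_nat p | d1 * (Z.of_nat j1 * c))%Z -> c <> 0%Z ->
     (- Z.of_nat p < c < Z.of_nat p)%Z -> False.
    move=> c hc c0 hcb; case: (primeZ_div pp hc) => [h|h].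
      by apply: (divZ_small h d10); lia.
    case: (primeZ_div pp h) => h'.
      by apply: (divZ_small h'); lia.
    exact: (divZ_small h' c0).
  move: HO' H2; case: (odd s1); case: (odd s2) => HO' H2.
  + have R : (d2 * Z.of_nat j2 = - (d1 * Z.of_nat j1))%Z by have := HO'; lia.
    apply: (F (2 * Z.of_nat s2 + 2 * Z.of_nat j2 + 1 - (2 * Z.of_nat s1 + 2 * Z.of_nat j1 + 1))%Z); try lia.
    apply: (div_eq H2).
    transitivity (- (d1 * Z.of_nat j1) * (2 * Z.of_nat s1 + 2 * Z.of_nat j1 + 1) - (d2 * Z.of_nat j2) * (2 * Z.of_nat s2 + 2 * Z.of_nat j2 + 1))%Z; first ring.
    rewrite R; ring.
  + have R : (d2 * Z.of_nat j2 = (d1 * Z.of_nat j1))%Z by have := HO'; lia.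
    apply: (F (- (2 * Z.of_nat s1 + 2 * Z.of_nat j1 + 1 + (2 * Z.of_nat s2 + 2 * Z.of_nat j2 + 1)))%Z); try lia.
    apply: (div_eq H2).
    transitivity (- (d1 * Z.of_nat j1) * (2 * Z.of_nat s1 + 2 * Z.of_nat j1 + 1) - (d2 * Z.of_nat j2) * (2 * Z.of_nat s2 + 2 * Z.of_nat j2 + 1))%Z; first ring.
    rewrite R; ring.
  + have R : (d2 * Z.of_nat j2 = (d1 * Z.of_nat j1))%Z by have := HO'; lia.
    apply: (F (- (2 * Z.of_nat s1 + 2 * Z.of_nat j1 + 1 + (2 * Z.of_nat s2 + 2 * Z.of_nat j2 + 1)))%Z); try lia.
    apply: (div_eq H2).
    transitivity (- (d1 * Z.of_nat j1) * (2 * Z.of_nat s1 + 2 * Z.of_nat j1 + 1) - (d2 * Z.of_nat j2) * (2 * Z.of_nat s2 + 2 * Z.of_nat j2 + 1))%Z; first ring.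
    rewrite R; ring.
  + have R : (d2 * Z.of_nat j2 = - (d1 * Z.of_nat j1))%Z by have := HO'; lia.
    apply: (F (2 * Z.of_nat s2 + 2 * Z.of_nat j2 + 1 - (2 * Z.of_nat s1 + 2 * Z.of_nat j1 + 1))%Z); try lia.
    apply: (div_eq H2).
    transitivity (- (d1 * Z.of_nat j1) * (2 * Z.of_nat s1 + 2 * Z.of_nat j1 + 1) - (d2 * Z.of_nat j2) * (2 * Z.of_nat s2 + 2 * Z.of_nat j2 + 1))%Z; first ring.
    rewrite R; ring.
- rewrite (alt_one s1 j1).1 (alt_one s2 j2).2 in H0.
  by apply: d20; have := small_div H0; lia.
- rewrite (alt_one s1 j1).2 (alt_one s2 j2).1 in H0.
  by apply: d10; have := small_div H0; lia.
- rewrite (alt_one s1 j1).2 (alt_one s2 j2).2 in H0.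
  have R : d2 = (- d1)%Z by have := small_div H0; lia.
  subst d2.
  rewrite (alt_oddw s1 j1).2 (alt_oddw s2 j2).2 in HO.
  rewrite (alt_sq s1 j1).2 (alt_sq s2 j2).2 in H2.
  have G : forall g1 g2 : Z, (- Z.of_nat L <= g1 - g2 <= Z.of_nat L)%Z ->
     (Z.of_nat ((q - 1) * L).+1 | d1 * g1 + - d1 * g2)%Z -> g1 = g2.
    move=> g1 g2 hg h.
    have b1 : (- (Z.of_nat q - 1) * Z.of_nat L <= d1 * (g1 - g2) <= (Z.of_nat q - 1) * Z.of_nat L)%Z by nia.
    have : (d1 * g1 + - d1 * g2 = 0)%Z by apply: (small_div h); nia.
    have -> : (d1 * g1 + - d1 * g2 = d1 * (g1 - g2))%Z by ring.
    case/Z.mul_eq_0 => //; lia.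
  have J : j1 = j2.
    move: HO; case: (odd s1); case: (odd s2) => /G HO; lia.
  subst j2.
  move: H2; set A := (X in (_ | X)%Z) => H2.
  have EA : A = (d1 * ((Z.of_nat s1 - Z.of_nat s2) * (Z.of_nat s1 + Z.of_nat s2 + 2 * Z.of_nat j1 + 2)))%Z.
    rewrite /A; ring.
  rewrite EA in H2.
  case: (primeZ_div pp H2) => h.
    by apply: (divZ_small h d10); lia.
  case: (primeZ_div pp h) => h'; by apply: (divZ_small h'); lia.
Qed.
Lemma is_alt_alpha q t a b : a < q -> b < q -> a != b -> is_alt q (alpha t a b).
Proof.
move=> aq bq ab; apply/hasP; exists a; first by rewrite mem_iota.
apply/hasP; exists b; first by rewrite mem_iota.
by rewrite ab size_alpha eqxx.
Qed.

Lemma alt_le_L q n L x s t a b r : inALL q n L x -> x = s ++ alpha t a b ++ r ->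
  a < q -> b < q -> a != b -> t <= L.
Proof.
move=> /and3P [_ _ H] Ex aq bq ab.
have sz : size x = size s + t + size r by rewrite Ex !size_cat size_alpha addnA.
move/allP: H => /(_ (size s)); rewrite mem_iota sz => /(_ ltac:(lia)).
move/allP => /(_ (size s + t)); rewrite mem_iota => /(_ ltac:(lia)).
have -> : drop (size s) (take (size s + t) x) = alpha t a b.
  by rewrite Ex catA take_size_cat ?size_cat ?size_alpha // drop_size_cat.
rewrite is_alt_alpha //= => h; lia.
Qed.

Lemma ceilZ_spec (x : R) : (x <= IZR (ceilZ x) < x + 1)%RR.
Proof. rewrite /ceilZ opp_IZR; have [h1 h2] := base_Int_part (- x); lra. Qed.

Lemma ln_nonpos (x : R) : (x <= 0)%RR -> ln x = 0%RR.
Proof. move=> h; unfold ln; destruct (Rlt_dec 0 x); [exfalso; lra | reflexivity]. Qed.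

Lemma ln_gt0 (x : R) : (1 < x)%RR -> (0 < ln x)%RR.
Proof. move=> h; rewrite -ln_1; apply: ln_increasing; lra. Qed.

Lemma ln_le1 (x : R) : (x <= 1)%RR -> (ln x <= 0)%RR.
Proof.
move=> h; case: (Rle_lt_dec x 0) => h0; first by rewrite ln_nonpos //; lra.
case: (Rle_lt_or_eq_dec _ _ h) => h1; last by rewrite h1 ln_1; lra.
rewrite -ln_1; apply: Rlt_le; apply: ln_increasing; lra.
Qed.

Lemma INR_gt1 m : 2 <= m -> (1 < INR m)%RR.
Proof. move=> h; apply: (lt_INR 1 m); apply/ltP; lia. Qed.

Lemma Lpar_ge2 q n : 2 <= q -> 1 <= n -> 2 <= Lpar q n -> q < n.
Proof.
move=> hq hn hL; rewrite ltnNge; apply/negP => hnq.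
have lq : (0 < ln (INR q))%RR by apply: ln_gt0; apply: INR_gt1.
have hn1 : (1 <= INR n)%RR by apply: (le_INR 1 n); apply/leP.
have lnn0 : (0 <= ln (INR n))%RR.
  case: (Rle_lt_or_eq_dec _ _ hn1) => h; first by apply: Rlt_le; apply: ln_gt0.
  by rewrite -h ln_1; lra.
have lnle : (ln (INR n) <= ln (INR q))%RR.
  have : (INR n <= INR q)%RR by apply: le_INR; apply/leP.
  case/Rle_lt_or_eq_dec => h; last by rewrite h; lra.
  apply: Rlt_le; apply: ln_increasing => //; lra.
set rho := Rdiv (ln (INR n)) (ln (INR q)).
have erho : (rho * ln (INR q) = ln (INR n))%RR by rewrite /rho; field; lra.
have rho1 : (rho <= 1)%RR by nra.
have lr := ln_le1 rho1.
set z := Rdiv (ln rho) (ln (INR q)).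
have ez : (z * ln (INR q) = ln rho)%RR by rewrite /z; field; lra.
have z0 : (z <= 0)%RR by nra.
have r1 : (Rplus (logq q (INR n)) (logq q (logq q (INR n))) <= 1)%RR.
  rewrite /logq -/rho -/z; lra.
move: hL; rewrite /Lpar.
have [c1 c2] := ceilZ_spec (Rplus (logq q (INR n)) (logq q (logq q (INR n)))).
have : (IZR (ceilZ (Rplus (logq q (INR n)) (logq q (logq q (INR n))))) < 2)%RR by lra.
move/lt_IZR; lia.
Qed.

Lemma part1 (q n p d1 d2 d3 : nat) :
     2 <= q -> 1 <= n -> least_prime_gt (4 * n) p ->
     d1 <= 2 * q - 2 -> d2 <= p - 1 -> d3 <= (q - 1) * Lpar q n ->
     forall x y : seq nat,
       inC2Aux q n p d1 d2 d3 x -> inC2Aux q n p d1 d2 d3 y -> x != y ->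
       dH (Rvec x) (Rvec y) = 4 ->
       ~ (exists (u v w : seq nat) (t1 t2 a1 b1 a2 b2 : nat),
            [/\ qary q u, qary q v, qary q w & 1 <= size v] /\
            [/\ 1 <= t1, 1 <= t2 & [/\ a1 < q, b1 < q, a2 < q & b2 < q]] /\
            a1 != b1 /\ a2 != b2 /\
            x = u ++ alpha t1 a1 b1 ++ v ++ alpha t2 a2 b2 ++ w /\
            y = u ++ alpha t1 b1 a1 ++ v ++ alpha t2 b2 a2 ++ w).
Proof.
move=> hq hn [pp hp _] _ _ _ x y Hx Hy _ _
  [u [v [w [t1 [t2 [a1 [b1 [a2 [b2 [[Qu Qv Qw Sv] [[T1 T2 [A1 B1 A2 B2]] [N1 [N2 [Ex Ey]]]]]]]]]]]]]].
move: Hx Hy; rewrite /inC2Aux; set L := Lpar q n.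
move=> /and4P [Ax Hx0 Hx2 HxO] /and4P [Ay Hy0 Hy2 HyO].
have hL1 : t1 <= L by apply: (alt_le_L Ax Ex).
have hL2 : t2 <= L.
  apply: (alt_le_L (s := u ++ alpha t1 a1 b1 ++ v) (r := w) Ax _ A2 B2 N2).
  by rewrite Ex -!catA.
have h2L : 2 <= L.
  case: t1 T1 Ex Ey {hL1} => // t' _ Ex Ey.
  case: v Qv Sv Ex Ey => // v0 v' Qv _ Ex Ey.
  have v0q : v0 < q by move: Qv => /andP [].
  set c := if odd t' then b1 else a1.
  set c' := if odd t' then a1 else b1.
  have ex : x = (u ++ alpha t' a1 b1) ++ alpha 2 c v0 ++ (v' ++ alpha t2 a2 b2 ++ w).
    by rewrite Ex /alpha mkseqS -cats1 -!catA.
  have ey : y = (u ++ alpha t' b1 a1) ++ alpha 2 c' v0 ++ (v' ++ alpha t2 b2 a2 ++ w).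
    by rewrite Ey /alpha mkseqS -cats1 -!catA.
  have cq : c < q by rewrite /c; case: (odd t').
  have cq' : c' < q by rewrite /c'; case: (odd t').
  case: (eqVneq c v0) => hc.
    have hc' : c' != v0.
      by rewrite -hc /c /c'; case: (odd t'); rewrite // eq_sym.
    exact: (alt_le_L Ay ey).
  exact: (alt_le_L Ax ex).
have hqn := Lpar_ge2 hq hn h2L.
have sz : size x = n by move: Ax => /and3P [/eqP].
have szx : size x = size u + t1 + size v + t2 + size w.
  by rewrite Ex !size_cat !size_alpha !addnA.
have eVT : forall k z, VT k z = W (fun i => i.+1 ^ k) z by [].
subst x y.
have hs1 : size u + t1 < size u + t1 + size v by clear -Sv; lia.
have hs2 : size u + t1 + size v + t2 <= n by clear -sz szx; lia.
have d10 : (Z.of_nat a1 - Z.of_nat b1)%Z <> 0%Z by clear -N1; move: N1 => /eqP; lia.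
have d20 : (Z.of_nat a2 - Z.of_nat b2)%Z <> 0%Z by clear -N2; move: N2 => /eqP; lia.
have hd1 : (- Z.of_nat q < Z.of_nat a1 - Z.of_nat b1 < Z.of_nat q)%Z by clear -A1 B1; lia.
have hd2 : (- Z.of_nat q < Z.of_nat a2 - Z.of_nat b2 < Z.of_nat q)%Z by clear -A2 B2; lia.
have H0 := mod_divZ Hx0 Hy0; rewrite !eVT W_diff in H0.
have HO := mod_divZ HxO HyO; rewrite !VT_odd W_diff in HO.
have H2 := mod_divZ Hx2 Hy2; rewrite !eVT W_diff in H2.
exact: (@core p q L n (size u) (size u + t1 + size v) t1 t2
          (Z.of_nat a1 - Z.of_nat b1) (Z.of_nat a2 - Z.of_nat b2) pp hp hqn T1 T2 hL1 hL2
          hs1 hs2 d10 hd1 d20 hd2 H0 HO H2).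
Qed.
Lemma count_le_in (T : eqType) (a1 a2 : pred T) s :
  {in s, forall x, a1 x -> a2 x} -> count a1 s <= count a2 s.
Proof.
elim: s => //= x s IH H.
have h1 := H x (mem_head x s).
have h2 : count a1 s <= count a2 s by apply: IH => y ys; apply: H; rewrite inE ys orbT.
by case: (a1 x) h1 => [-> //|_]; rewrite add0n; apply: leq_trans h2 (leq_addl _ _).
Qed.

Lemma count_words_S (Q : pred (seq nat)) q j :
  count Q (words q j.+1) = \sum_(a <- iota 0 q) count (fun w => Q (a :: w)) (words q j).
Proof.
rewrite /=; elim: (iota 0 q) => [|a s IH]; first by rewrite big_nil.
by rewrite allpairs_cons count_cat count_map big_cons IH.
Qed.

Lemma sum_iota_const q c : \sum_(a <- iota 0 q) c = q * c.
Proof. by rewrite big_const_seq count_predT size_iota iter_addn_0 mulnC. Qed.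

Lemma size_words q n : size (words q n) = q ^ n.
Proof.
elim: n => [|n IH] //=; by rewrite size_allpairs size_iota IH expnS.
Qed.

Lemma words_prop q n w : w \in words q n -> size w = n /\ qary q w.
Proof.
elim: n w => [|n IH] w /=; first by rewrite inE => /eqP ->.
case/allpairsP => [[a w'] [/= ha hw' ->]].
have [s1 s2] := IH _ hw'.
by split; [rewrite /= s1 | rewrite /qary /= -/(qary q w') s2 andbT; move: ha; rewrite mem_iota].
Qed.

Lemma words_uniq q n : uniq (words q n).
Proof.
elim: n => [|n IH] //=.
apply: allpairs_uniq => //; first exact: iota_uniq.
by move=> [a w] [b w'] _ _ /= [-> ->].
Qed.

Lemma count_window0 q (P : pred (seq nat)) m k :
  count (fun x => P (take m x)) (words q (m + k)) = q ^ k * count P (words q m).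
Proof.
elim: m P => [|m IH] P.
  rewrite add0n /= addn0.
  have -> : count (fun x => P (take 0 x)) (words q k) = P [::] * size (words q k).
    rewrite (eq_count (a2 := fun _ => P [::])); last by move=> x; rewrite take0.
    by elim: (words q k) => [|x s IHs] /=; [rewrite muln0 | rewrite IHs mulnS].
  by rewrite size_words mulnC.
rewrite addSn !count_words_S.
under eq_bigr => a _ do rewrite (IH (fun w => P (a :: w))).
by rewrite -big_distrr.
Qed.

Lemma count_window q (P : pred (seq nat)) i m k :
  count (fun x => P (drop i (take (i + m) x))) (words q (i + m + k)) =
  q ^ (i + k) * count P (words q m).
Proof.
elim: i => [|i IH].
  rewrite !add0n (eq_count (a2 := fun x => P (take m x))) ?count_window0 // => x.
  by rewrite drop0.
rewrite !addSn count_words_S.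
under eq_bigr => a _ do rewrite (eq_count (a2 := fun x => P (drop i (take (i + m) x)))) ?IH //.
by rewrite sum_iota_const expnS mulnA.
Qed.
Lemma count_window' q (P : pred (seq nat)) i m n : i + m <= n ->
  count (fun x => P (drop i (take (i + m) x))) (words q n) =
  q ^ (n - m) * count P (words q m).
Proof.
move=> h; have E : n = i + m + (n - (i + m)) by lia.
rewrite [in LHS]E count_window; congr (q ^ _ * _); lia.
Qed.

Lemma count_has (T : Type) (I : Type) (Q : I -> pred T) r s :
  count (fun x => has (Q^~ x) r) s <= \sum_(i <- r) count (Q i) s.
Proof.
elim: r => [|i r IH] /=; first by rewrite big_nil count_pred0.
rewrite big_cons.
have := count_predUI (Q i) (fun x => has (Q^~ x) r) s.
rewrite (eq_count (a1 := predU _ _) (a2 := fun x => Q i x || has (Q^~ x) r)) // => E.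
lia.
Qed.

Lemma take_alpha k t a b : take k (alpha t a b) = alpha (minn k t) a b.
Proof. by rewrite /alpha /mkseq -map_take take_iota. Qed.

Lemma is_alt_take q k s : is_alt q s -> is_alt q (take k s).
Proof.
case/hasP => a ha /hasP [b hb /andP [ab /eqP E]].
apply/hasP; exists a => //; apply/hasP; exists b => //; rewrite ab /=.
by rewrite E take_alpha size_alpha.
Qed.

Lemma count_alt q m : count (is_alt q) (words q m) <= q * q.
Proof.
set A := iota 0 q.
apply: (leq_trans (n := count (fun x => has (fun a => has (fun b => x == alpha m a b) A) A) (words q m))).
  apply: count_le_in => x /words_prop [sx _] /hasP [a ha /hasP [b hb /andP [_ /eqP E]]].
  apply/hasP; exists a => //; apply/hasP; exists b => //; by rewrite E sx.
apply: leq_trans (count_has _ _ _) _.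
have -> : q * q = \sum_(a <- A) q by rewrite sum_iota_const.
apply: leq_sum => a _.
apply: leq_trans (count_has _ _ _) _.
have {2}-> : q = \sum_(b <- A) 1 by rewrite sum_iota_const muln1.
apply: leq_sum => b _.
by rewrite (eq_count (a2 := pred1 (alpha m a b))) // count_uniq_mem ?words_uniq // leq_b1.
Qed.

Lemma notALL_window q n L x : x \in words q n -> ~~ inALL q n L x ->
  has (fun i => is_alt q (drop i (take (i + L.+1) x))) (iota 0 (n - L)).
Proof.
move=> /words_prop [sx qx]; rewrite /inALL sx eqxx qx !andTb.
case/allPn => i; rewrite mem_iota => hi /allPn [j]; rewrite mem_iota => hj.
rewrite negb_imply -ltnNge => /andP [ha hL].
apply/hasP; exists i; first by rewrite mem_iota; lia.
have -> : drop i (take (i + L.+1) x) = take L.+1 (drop i (take j x)).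
  by rewrite take_drop take_takel; [congr (drop _ (take _ _)); lia | lia].
exact: is_alt_take.
Qed.

Lemma count_ALL_lb q n L :
  q ^ n <= count (inALL q n L) (words q n) + (n - L) * (q ^ (n - L.+1) * (q * q)).
Proof.
have E := count_predC (inALL q n L) (words q n); rewrite size_words in E.
rewrite -{1}E leq_add2l.
apply: (leq_trans (n := count (fun x => has (fun i => is_alt q (drop i (take (i + L.+1) x))) (iota 0 (n - L))) (words q n))).
  by apply: count_le_in => x hx /= h; apply: notALL_window.
apply: leq_trans (count_has _ _ _) _.
rewrite -sum_iota_const.
rewrite big_seq_cond [X in _ <= X]big_seq_cond.
apply: leq_sum => i; rewrite andbT mem_iota => /andP [_ hi].
rewrite count_window'; last by lia.
by rewrite leq_mul2l count_alt orbT.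
Qed.
Lemma count_sum (T : Type) (a : pred T) s : count a s = \sum_(x <- s) (a x : nat).
Proof. by elim: s => [|x s IH] /=; rewrite ?big_nil ?big_cons ?IH. Qed.

Lemma sum_ord_andb (m r : nat) (A : bool) : r < m -> \sum_(i < m) (A && (r == i) : nat) = A.
Proof.
move=> h; rewrite (bigD1 (Ordinal h)) //= eqxx andbT big1 ?addn0 // => i hi.
have -> : (r == i) = false.
  by apply/negbTE; move: hi; apply: contra => /eqP e; apply/eqP/val_inj.
by rewrite andbF.
Qed.

Lemma sum_C2 q n p :
  0 < 2 * q - 1 -> 0 < p ->
  \sum_(d1 < 2 * q - 1) \sum_(d2 < p) \sum_(d3 < ((q - 1) * Lpar q n).+1)
     cardC2Aux q n p d1 d2 d3 = count (inALL q n (Lpar q n)) (words q n).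
Proof.
move=> hm hp; rewrite /cardC2Aux.
under eq_bigr => d1 _ do under eq_bigr => d2 _ do under eq_bigr => d3 _ do
  rewrite size_filter count_sum.
rewrite count_sum.
under eq_bigr => d1 _ do under eq_bigr => d2 _ do rewrite exchange_big.
under eq_bigr => d1 _ do rewrite exchange_big.
rewrite exchange_big; apply: eq_bigr => x _.
set m0 := 2 * q - 1; set M := ((q - 1) * Lpar q n).+1.
set A := inALL q n (Lpar q n) x.
have r1 : VT 0 x %% m0 < m0 by rewrite ltn_pmod.
have r2 : VT 2 x %% p < p by rewrite ltn_pmod.
have r3 : VT 0 (oddseq x) %% M < M by rewrite ltn_pmod.
transitivity (\sum_(d1 < m0) \sum_(d2 < p)
   ((A && (VT 0 x %% m0 == d1)) && (VT 2 x %% p == d2) : nat)).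
  apply: eq_bigr => d1 _; apply: eq_bigr => d2 _.
  rewrite -(sum_ord_andb _ r3); apply: eq_bigr => d3 _.
  by rewrite /inC2Aux (modn_small (ltn_ord d1)) (modn_small (ltn_ord d2))
     (modn_small (ltn_ord d3)) -/m0 -/M -/A !andbA.
transitivity (\sum_(d1 < m0) (A && (VT 0 x %% m0 == d1) : nat)).
  by apply: eq_bigr => d1 _; rewrite sum_ord_andb.
by rewrite sum_ord_andb.
Qed.

Lemma pigeon_C2 q n p :
  0 < 2 * q - 1 -> 0 < p ->
  exists d1 d2 d3, [/\ d1 < 2 * q - 1, d2 < p, d3 < ((q - 1) * Lpar q n).+1 &
    count (inALL q n (Lpar q n)) (words q n) <=
    cardC2Aux q n p d1 d2 d3 * ((2 * q - 1) * p * ((q - 1) * Lpar q n).+1)].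
Proof.
move=> hm hp.
set m0 := 2 * q - 1; set M := ((q - 1) * Lpar q n).+1.
set T := count _ _; set K := m0 * p * M.
case: (boolP [exists d1 : 'I_m0, [exists d2 : 'I_p, [exists d3 : 'I_M,
          T <= cardC2Aux q n p d1 d2 d3 * K]]]).
  case/existsP => d1 /existsP [d2 /existsP [d3 h]].
  by exists d1, d2, d3; split.
rewrite negb_exists => /forallP H.
have HK : 0 < K by rewrite /K !muln_gt0 hm hp.
have : \sum_(d1 < m0) \sum_(d2 < p) \sum_(d3 < M) (cardC2Aux q n p d1 d2 d3 * K + 1)
        <= \sum_(d1 < m0) \sum_(d2 < p) \sum_(d3 < M) T.
  apply: leq_sum => d1 _; apply: leq_sum => d2 _; apply: leq_sum => d3 _.
  have := H d1; rewrite negb_exists => /forallP /(_ d2); rewrite negb_exists => /forallP /(_ d3).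
  by rewrite addn1 -ltnNge.
rewrite !sum_nat_const !card_ord.
under eq_bigr => d1 _ do under eq_bigr => d2 _ do rewrite big_split /= sum_nat_const card_ord -big_distrl /=.
under eq_bigr => d1 _ do rewrite big_split /= sum_nat_const card_ord -big_distrl /=.
rewrite big_split /= sum_nat_const card_ord -big_distrl /= sum_C2 // -/T.
rewrite /K; nia.
Qed.
Lemma prime_ndvd_fact p j : prime p -> j < p -> ~~ (p %| j`!).
Proof.
move=> pp; elim: j => [|j IH] hj; first by rewrite fact0 dvdn1; apply/eqP => e; rewrite e in pp.
rewrite factS Euclid_dvdM // negb_or IH ?andbT; last by lia.
by apply/negP => /dvdn_leq; lia.
Qed.

Lemma prime_dvd_fact_le p j : prime p -> p %| j`! -> p <= j.
Proof. move=> pp h; rewrite leqNgt; apply/negP => hj; by move: (prime_ndvd_fact pp hj); rewrite h. Qed.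

Lemma sum_le_t t N : \sum_(1 <= k < N.+1) (k <= t : nat) = minn N t.
Proof.
elim: N => [|N IH]; first by rewrite big_geq // min0n.
rewrite big_nat_recr //= IH; case: (leqP N.+1 t) => h /=.
  by rewrite (minn_idPl (ltnW h)) addn1.
by rewrite (minn_idPr (h : t <= N)) addn0.
Qed.

Lemma logn_fact_ext p m : prime p ->
  logn p m`! = \sum_(1 <= k < (m.*2).+1) m %/ p ^ k.
Proof.
move=> pp; rewrite logn_fact //.
rewrite [RHS](big_cat_nat (n := m.+1)) //=; last by rewrite ltnS -addnn leq_addr.
rewrite [X in _ = _ + X]big1_seq ?addn0 // => k /andP [_]; rewrite mem_index_iota => /andP [hk _].
apply: divn_small; apply: (leq_trans hk); apply: ltnW; apply: ltn_expl; exact: prime_gt1.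
Qed.

Lemma logn_binom p m : prime p -> 0 < m ->
  logn p 'C(m.*2, m) <= trunc_log p m.*2.
Proof.
move=> pp hm; set t := trunc_log p m.*2.
have hp1 := prime_gt1 pp.
have bf := bin_fact (leq_addr m m : m <= m + m).
rewrite addnK addnn in bf.
have hC : 0 < 'C(m.*2, m) by rewrite bin_gt0 -addnn leq_addr.
have E : logn p (m.*2)`! = logn p 'C(m.*2, m) + (logn p m`! + logn p m`!).
  by rewrite -bf !lognM ?hC ?fact_gt0 ?muln_gt0 ?fact_gt0.
have L1 : logn p (m.*2)`! <= (logn p m`! + logn p m`!) + t.
  rewrite logn_fact // logn_fact_ext //.
  apply: (leq_trans (n := \sum_(1 <= k < (m.*2).+1) (2 * (m %/ p ^ k) + (k <= t)))).
    apply: leq_sum => k _; case: (leqP k t) => hkt /=.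
      by rewrite mul2n -!addnn; exact: leq_divDl.
    rewrite addn0 divn_small //; apply: (leq_trans (trunc_log_ltn _ hp1)).
    by rewrite leq_exp2l.
  rewrite big_split /= sum_le_t -big_distrr /=.
  set S := \sum_(1 <= k < (m.*2).+1) m %/ p ^ k.
  have := geq_minr m.*2 t; lia.
lia.
Qed.
Lemma pow_logn_binom p m : prime p -> 0 < m -> p ^ logn p 'C(m.*2, m) <= m.*2.
Proof.
move=> pp hm; have hp1 := prime_gt1 pp.
apply: leq_trans (trunc_logP hp1 _); last by rewrite -addnn; lia.
by rewrite leq_exp2l // logn_binom.
Qed.

Lemma logn_binom_big p m : prime p -> 0 < m -> m.*2 < p * p -> logn p 'C(m.*2, m) <= 1.
Proof.
move=> pp hm hpp; have hp1 := prime_gt1 pp.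
apply: leq_trans (logn_binom pp hm) _.
rewrite leqNgt; apply/negP => h.
have := trunc_logP hp1 (n := m.*2); rewrite -addnn => /(_ ltac:(lia)).
rewrite addnn => h2.
have : p ^ 2 <= p ^ trunc_log p m.*2 by rewrite leq_exp2l.
rewrite -mulnn; lia.
Qed.

Lemma binom_ge m : 2 ^ m <= 'C(m.*2, m).
Proof.
elim: m => [|m IH] //.
have e := mul_bin_diag (m.+1).*2 m.
rewrite doubleS /= in e.
have h2 : 'C(m.*2, m) <= 'C(m.*2.+1, m) by apply: leq_bin2l.
rewrite doubleS expnS.
have : m.+1 * (2 * 2 ^ m) <= m.+1 * 'C(m.*2.+2, m.+1).
  have h3 : 2 ^ m <= 'C(m.*2.+1, m) := leq_trans IH h2.
  rewrite -e (_ : m.*2.+2 = m.+1 * 2); last by rewrite -doubleS -muln2.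
  by rewrite -mulnA leq_mul2l leq_mul2l h3 !orbT.
by rewrite leq_pmul2l.
Qed.

Lemma prod_logn_le C N : 0 < C -> \prod_(0 <= p < N) p ^ logn p C <= C.
Proof.
move=> hC.
have E : C = \prod_(0 <= p < C.+1) p ^ logn p C.
  rewrite -{1}(partnT hC) /partn; apply: eq_bigl => p; by rewrite inE.
have pos : forall a b, 0 < \prod_(a <= p < b) p ^ logn p C.
  move=> a b; apply: prodn_gt0 => p; rewrite expn_gt0.
  by case: p => //=; rewrite -leqn0 leqNgt logn_gt0 mem_primes.
case: (leqP N C.+1) => h.
  rewrite [X in _ <= X]E [X in _ <= X](big_cat_nat (n := N)) //=.
  by apply: leq_pmulr.
rewrite (big_cat_nat (n := C.+1)) //=; last exact: ltnW.
rewrite [X in _ * X]big1_seq ?muln1 -?E // => p /andP [_]; rewrite mem_index_iota => /andP [hp _].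
suff -> : logn p C = 0 by [].
apply/eqP; rewrite -leqn0 leqNgt logn_gt0 mem_primes; apply/negP => /and3P [_ _ /dvdn_leq].
by move=> /(_ hC); lia.
Qed.

Lemma sub_prod C (P : pred nat) N : 0 < C ->
  (forall p, P p -> prime p && (p %| C)) ->
  \prod_(0 <= p < N) (if P p then p else 1) <= C.
Proof.
move=> hC H; apply: leq_trans (prod_logn_le N hC).
apply: leq_prod => p _; case: (boolP (P p)) => hp.
  case/andP: (H p hp) => pp hd.
  have : 0 < logn p C by rewrite logn_gt0 mem_primes pp hC hd.
  case: (logn p C) => // k _; rewrite expnS; apply: leq_pmulr; rewrite expn_gt0 prime_gt0 //.
by rewrite expn_gt0; case: p {hp} => //=; rewrite -leqn0 leqNgt logn_gt0 mem_primes.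
Qed.

Lemma prod_trunc (f : nat -> nat) K N :
  (forall p, K < p -> f p = 1) -> (forall p, 0 < f p) ->
  \prod_(0 <= p < N) f p <= \prod_(0 <= p < K.+1) f p.
Proof.
move=> H1 H2; case: (leqP N K.+1) => h.
  rewrite [X in _ <= X](big_cat_nat (n := N)) //=.
  by apply: leq_pmulr; rewrite prodn_gt0.
rewrite (big_cat_nat (n := K.+1)) //=; last exact: ltnW.
rewrite [X in _ * X]big1_seq ?muln1 // => p /andP [_]; rewrite mem_index_iota => /andP [hp _].
by apply: H1.
Qed.

Lemma prod_small_eq (c s N : nat) :
  \prod_(0 <= p < N) (if p < s then c else 1) = c ^ minn N s.
Proof.
elim: N => [|N IH]; first by rewrite big_geq // min0n.
rewrite big_nat_recr // IH; cbv beta.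
case: (ltnP N s) => h.
  by rewrite (minn_idPl h) expnSr.
by rewrite (minn_idPr (leqW h)); exact: muln1.
Qed.

Lemma prod_small (c s N : nat) : 0 < c ->
  \prod_(0 <= p < N) (if p < s then c else 1) <= c ^ s.
Proof. by move=> hc; rewrite prod_small_eq leq_pexp2l // geq_minr. Qed.
Definition prim N := \prod_(0 <= p < N.+1) (if prime p then p else 1).

Lemma binom_mid_le k : 'C(2 * k + 1, k) <= 4 ^ k.
Proof.
set n := 2 * k + 1.
have S : 2 ^ n = \sum_(i < n.+1) 'C(n, i).
  have := expnDn 1 1 n; rewrite add1n => ->.
  by apply: eq_bigr => i _; rewrite !exp1n !muln1.
have hk : k < n.+1 by rewrite /n; lia.
have hk1 : k.+1 < n.+1 by rewrite /n; lia.
have D : 'C(n, k) + 'C(n, k.+1) <= 2 ^ n.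
  rewrite S (bigD1 (Ordinal hk)) //= (bigD1 (Ordinal hk1)) /=; last first.
    by apply/eqP => /(congr1 val) /=; lia.
  by rewrite addnA leq_addr.
have E : 'C(n, k.+1) = 'C(n, k).
  by rewrite -{1}(_ : n - k = k.+1) ?bin_sub // /n; lia.
rewrite E addnn -mul2n in D.
have e4 : 2 ^ n = 2 * 4 ^ k by rewrite /n addn1 expnS expnM.
by rewrite e4 leq_pmul2l in D.
Qed.

Lemma prime_dvd_binmid p k : prime p -> k.+1 < p -> p <= 2 * k + 1 -> p %| 'C(2 * k + 1, k).
Proof.
move=> pp h1 h2.
have hk : k <= 2 * k + 1 by lia.
have bf := bin_fact hk; rewrite (_ : 2 * k + 1 - k = k.+1) in bf; last by lia.
have hd : p %| (2 * k + 1)`! by apply: dvdn_fact; rewrite prime_gt0.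
rewrite -bf in hd.
have cop : coprime p (k`! * k.+1`!).
  rewrite prime_coprime // Euclid_dvdM // negb_or !prime_ndvd_fact //; lia.
by rewrite Gauss_dvdl in hd.
Qed.

Lemma prim_le N : prim N <= 4 ^ N.
Proof.
elim/ltn_ind: N => N IH.
case: N IH => [|N] IH; first by rewrite /prim big_nat1.
have pN : prim N <= 4 ^ N by apply: IH.
case: (boolP (odd N)) => oN.
  rewrite /prim big_nat_recr //= -/(prim N) expnS mulnC.
  apply: leq_mul => //.
  case: (boolP (prime N.+1)) => // pN1.
  case: (even_prime pN1) => [->//|]; by rewrite /= oN.
have [k ek] : exists k, N = 2 * k.
  by exists N./2; rewrite -{1}(odd_double_half N) (negbTE oN) /= mul2n.
subst N.
clear oN; case: k IH pN => [|k] IH pN; first by rewrite /prim !big_nat_recr //= big_geq.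
set f := fun p => if prime p then p else 1.
rewrite /prim (big_cat_nat (n := k.+3)) //=; last by lia.
have h1 : \prod_(0 <= i < k.+3) f i <= 4 ^ k.+2.
  by apply: (IH k.+2); lia.
have h2 : \prod_(k.+3 <= i < (2 * k.+1).+2) f i <= 4 ^ k.+1.
  apply: leq_trans (binom_mid_le k.+1).
  set P := fun p => prime p && (k.+2 < p) && (p <= 2 * k.+1 + 1).
  have -> : \prod_(k.+3 <= i < (2 * k.+1).+2) f i =
            \prod_(0 <= p < (2 * k.+1).+2) (if P p then p else 1).
    rewrite [RHS](big_cat_nat (n := k.+3)) //=; last by lia.
    rewrite [X in _ = X * _]big1_seq ?mul1n; last first.
      move=> i /andP [_]; rewrite mem_index_iota => /andP [_ hi].
      have e1 : (k.+2 < i) = false by lia.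
      by rewrite /P e1 andbF.
    apply: eq_big_seq => i; rewrite mem_index_iota => /andP [hi1 hi2].
    have e1 : (k.+2 < i) = true by lia.
    have e2 : (i <= 2 * k.+1 + 1) = true by lia.
    by rewrite /f /P e1 e2 !andbT.
  apply: sub_prod; first by rewrite bin_gt0; lia.
  move=> p /andP [/andP [pp hp1] hp2]; rewrite pp /=.
  by apply: prime_dvd_binmid.
apply: leq_trans (leq_mul h1 h2) _; rewrite -expnD leq_exp2l //; lia.
Qed.
Lemma bert_nat n m s : 0 < m ->
  (forall p, prime p -> 4 * n < p -> p <= m.*2 -> False) -> m.*2 < s * s ->
  'C(m.*2, m) <= (m.*2) ^ s * 4 ^ (4 * n).
Proof.
move=> hm noP hs.
set C := 'C(m.*2, m).
have hC : 0 < C by rewrite bin_gt0 -addnn leq_addr.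
have E : C = \prod_(0 <= p < C.+1) p ^ logn p C.
  rewrite -{1}(partnT hC) /partn; apply: eq_bigl => p; by rewrite inE.
have bf := bin_fact (leq_addr m m : m <= m + m).
rewrite addnK addnn -/C in bf.
have h2m : 0 < m.*2 by rewrite -addnn; lia.
set A := fun p => if p < s then m.*2 else 1.
set B := fun p => if prime p && (p <= 4 * n) then p else 1.
have Apos : forall p, 0 < A p by move=> p; rewrite /A; case: (p < s).
have Bpos : forall p, 0 < B p.
  by move=> p; rewrite /B; case: (boolP (prime p && _)) => // /andP [pp _]; apply: prime_gt0.
rewrite {1}E.
apply: (leq_trans (n := \prod_(0 <= p < C.+1) (A p * B p))).
  apply: leq_prod => p _.
  case: (posnP (logn p C)) => hv.
    by rewrite hv expn0 muln_gt0 Apos Bpos.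
  move: (hv); rewrite logn_gt0 mem_primes => /and3P [pp _ pC].
  have pf : p %| (m.*2)`! by rewrite -bf; apply: dvdn_mulr.
  have p2m := prime_dvd_fact_le pp pf.
  have p4n : p <= 4 * n by rewrite leqNgt; apply/negP => h; apply: (noP p pp h p2m).
  have eB : B p = p by rewrite /B pp p4n.
  rewrite eB /A; case: (ltnP p s) => hps.
    apply: leq_trans (pow_logn_binom pp hm) _; apply: leq_pmulr; exact: prime_gt0.
  have hv1 : logn p C <= 1.
    apply: logn_binom_big => //; apply: (leq_trans hs); exact: leq_mul.
  rewrite mul1n; apply: leq_trans (leq_pexp2l (prime_gt0 pp) hv1) _; by rewrite expn1.
rewrite big_split /=; apply: leq_mul; first exact: prod_small.
apply: leq_trans (prod_trunc (K := 4 * n) _ _ _) _.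
- by move=> p hp; rewrite /B (_ : p <= 4 * n = false) ?andbF //; lia.
- exact: Bpos.
apply: leq_trans (prim_le (4 * n)).
rewrite /prim; apply: eq_leq; apply: eq_big_seq => p; rewrite mem_index_iota => /andP [_ hp].
by rewrite /B (_ : p <= 4 * n = true) ?andbT //; lia.
Qed.

Lemma bert_nat2 n s : 0 < n -> 18 * n < s * s ->
  (forall p, prime p -> 4 * n < p -> p <= 18 * n -> False) -> 2 ^ n <= (18 * n) ^ s.
Proof.
move=> hn hs noP.
have e : (9 * n).*2 = 18 * n by rewrite -mul2n mulnA.
have := bert_nat (m := 9 * n) (n := n) (s := s).
rewrite e => /(_ ltac:(lia) noP hs) h.
have := binom_ge (9 * n); rewrite e => h0.
have := leq_trans h0 h.
have -> : 4 ^ (4 * n) = 2 ^ (8 * n) by rewrite (_ : 4 = 2 ^ 2) // -expnM mulnA.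
have -> : 2 ^ (9 * n) = 2 ^ n * 2 ^ (8 * n) by rewrite -expnD; congr (_ ^ _); lia.
by rewrite leq_pmul2r // expn_gt0.
Qed.
Lemma INR_muln m n : INR (m * n) = (INR m * INR n)%RR.
Proof. exact: mult_INR. Qed.

Lemma INR_addn m n : INR (m + n) = (INR m + INR n)%RR.
Proof. exact: plus_INR. Qed.

Lemma INR_expn m n : INR (m ^ n) = (INR m ^ n)%RR.
Proof. elim: n => [|n IH] //; by rewrite expnS INR_muln IH /=. Qed.

Lemma INR_leq m n : m <= n -> (INR m <= INR n)%RR.
Proof. by move=> /leP; apply: le_INR. Qed.

Lemma ln_le' (x y : R) : (0 < x)%RR -> (x <= y)%RR -> (ln x <= ln y)%RR.
Proof.
move=> hx hxy; case: (Rle_lt_or_eq_dec _ _ hxy) => h; last by rewrite h; lra.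
by apply: Rlt_le; apply: ln_increasing.
Qed.

Lemma ln_lt_id (z : R) : (0 < z)%RR -> (ln z < z)%RR.
Proof.
move=> hz; have h := exp_ineq1 z ltac:(lra).
rewrite -{2}(ln_exp z); apply: ln_increasing; lra.
Qed.

Lemma real_contra n s : 2 ^ 29 <= n -> (s - 1) * (s - 1) <= 18 * n ->
  2 ^ n <= (18 * n) ^ s -> False.
Proof.
move=> hn hs hp.
have hn' : (536870912 <= INR n)%RR.
  have := INR_leq hn; rewrite INR_expn (_ : INR 2 = 2%RR) //.
  have e : (2 ^ 29 = 536870912)%RR by ring.
  lra.
set N := INR (18 * n).
have eN : N = (18 * INR n)%RR.
  by rewrite /N INR_muln (_ : INR 18 = 18%RR) // INR_IZR_INZ.
have Npos : (0 < N)%RR by lra.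
set y := sqrt N; set z := sqrt y.
have ey : (y * y = N)%RR by apply: sqrt_sqrt; lra.
have y0 : (0 <= y)%RR by apply: sqrt_pos.
have ez : (z * z = y)%RR by apply: sqrt_sqrt.
have z0 : (0 <= z)%RR by apply: sqrt_pos.
have y98 : (98304 <= y)%RR.
  rewrite -(sqrt_square 98304); last lra.
  by apply: sqrt_le_1_alt; lra.
have z288 : (288 <= z)%RR.
  rewrite -(sqrt_square 288); last lra.
  by apply: sqrt_le_1_alt; lra.
have hs' : (INR s <= y + 1)%RR.
  case: (posnP s) => s0; first by rewrite s0 /=; lra.
  have := INR_leq hs; rewrite INR_muln minus_INR ?INR_muln; last by lia.
  rewrite /= -/N => h.
  have : (INR s - 1 <= y)%RR by nra.
  lra.
have h1 := INR_leq hp; rewrite !INR_expn -/N in h1.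
have hl : (INR n * ln 2 <= INR s * ln N)%RR.
  rewrite -!ln_pow //; last lra.
  apply: ln_le' => //; apply: pow_lt; rewrite /=; lra.
have eln : (ln N = 4 * ln z)%RR.
  have zpos : (0 < z)%RR by lra.
  have zz : (0 < z * z)%RR by nra.
  rewrite -ey -ez (ln_mult _ _ zz zz) (ln_mult _ _ zpos zpos); ring.
have lz : (ln z < z)%RR by apply: ln_lt_id; lra.
have lz0 : (0 <= ln z)%RR by rewrite -ln_1; apply: ln_le'; lra.
have l2 := ln_lt_2.
rewrite eln in hl.
have a1 : (INR s * (4 * ln z) <= (y + 1) * (4 * z))%RR.
  apply: Rmult_le_compat; try lra; apply: pos_INR.
have a2 : (INR n * / 2 <= INR n * ln 2)%RR by apply: Rmult_le_compat_l; lra.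
have eNz : (18 * INR n = y * y)%RR by lra.
have a3 : (y * y >= 288 * (z * y))%RR by rewrite -{1}ez; nra.
nra.
Qed.
Lemma exists_sqrt N : exists s, (s - 1) * (s - 1) <= N /\ N < s * s.
Proof.
elim: N => [|N [s [h1 h2]]]; first by exists 1.
case: (ltnP N.+1 (s * s)) => h; first by exists s; split => //; lia.
exists s.+1; split; first by rewrite subn1 /=; lia.
nia.
Qed.

Lemma bertrand_lite n : 2 ^ 29 <= n -> exists p, [/\ prime p, 4 * n < p & p <= 18 * n].
Proof.
move=> hn.
have n0 : 0 < n by apply: leq_trans hn; rewrite expn_gt0.
case: (boolP [exists p : 'I_(18 * n).+1, prime p && (4 * n < p)]).
  by case/existsP => p /andP [pp hp]; exists p; split => //; rewrite -ltnS.
rewrite negb_exists => /forallP H.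
have [s [hs1 hs2]] := exists_sqrt (18 * n).
exfalso; apply: (real_contra hn hs1).
apply: bert_nat2 => // p pp hp hp2.
by have := H (Ordinal (hp2 : p < (18 * n).+1)); rewrite /= pp hp.
Qed.
Lemma exp_le' (x y : R) : (x <= y)%RR -> (exp x <= exp y)%RR.
Proof.
move=> h; case: (Rle_lt_or_eq_dec _ _ h) => h'; last by rewrite h'; lra.
by apply: Rlt_le; apply: exp_increasing.
Qed.

Lemma INR_Z2Nat (z : Z) : (0 <= z)%Z -> INR (Z.to_nat z) = IZR z.
Proof. by move=> h; rewrite INR_IZR_INZ Z2Nat.id. Qed.

Lemma part2 q : 2 <= q ->
     exists (c : R) (N : nat), forall (n p : nat), N <= n ->
       least_prime_gt (4 * n) p ->
       exists d1 d2 d3 : nat,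
         [/\ d1 <= 2 * q - 2, d2 <= p - 1, d3 <= (q - 1) * Lpar q n &
          Rle (redundancy q n (cardC2Aux q n p d1 d2 d3))
             (Rplus (Rplus (logq q (INR n)) (logq q (logq q (INR n)))) c)].
Proof.
move=> hq.
exists (Rdiv (ln (INR (360 * q * q))) (ln (INR q))), (2 ^ 29 * q ^ (2 * q)).
move=> n p hN [pp hp hmin].
have q0 : 0 < q by lia.
have hn29 : 2 ^ 29 <= n by apply: leq_trans hN; apply: leq_pmulr; rewrite expn_gt0 q0.
have hnq : q ^ (2 * q) <= n by apply: leq_trans hN; apply: leq_pmull; rewrite expn_gt0.
have [p' [pp' hp' hp'n]] := bertrand_lite hn29.
have p18 : p <= 18 * n := leq_trans (hmin p' pp' hp') hp'n.
set L := Lpar q n.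
have Rq2 : (2 <= INR q)%RR by apply: (INR_leq hq).
have lq : (0 < ln (INR q))%RR by apply: ln_gt0; lra.
have lq2 : (/ 2 < ln (INR q))%RR.
  have := ln_lt_2; have := ln_le' (x := 2%RR) (y := INR q) ltac:(lra) Rq2; lra.
have Rnq : ((INR q) ^ (2 * q) <= INR n)%RR by rewrite -INR_expn; apply: INR_leq.
have Rqpow : (0 < (INR q) ^ (2 * q))%RR by apply: pow_lt; lra.
have npos : (0 < INR n)%RR by lra.
set rho := Rdiv (ln (INR n)) (ln (INR q)).
have erho : (rho * ln (INR q) = ln (INR n))%RR by rewrite /rho; field; lra.
have rho2q : (2 * INR q <= rho)%RR.
  have h := ln_le' Rqpow Rnq; rewrite ln_pow in h; last lra.
  rewrite mult_INR (_ : INR 2 = 2%RR) // in h.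
  nra.
have rho1 : (1 <= rho)%RR by lra.
have lrho0 : (0 <= ln rho)%RR by rewrite -ln_1; apply: ln_le'; lra.
have lrho : (ln rho < rho)%RR by apply: ln_lt_id; lra.
set t := Rdiv (ln rho) (ln (INR q)).
have et : (t * ln (INR q) = ln rho)%RR by rewrite /t; field; lra.
have t0 : (0 <= t)%RR by nra.
have t2 : (t <= 2 * rho)%RR by nra.
set r := Rplus (logq q (INR n)) (logq q (logq q (INR n))).
have er : r = (rho + t)%RR by [].
have [c1 c2] := ceilZ_spec r.
have cz : (0 <= ceilZ r)%Z by apply: le_IZR; lra.
have INRL : INR L = IZR (ceilZ r) by rewrite /L /Lpar INR_Z2Nat.
have qL : 2 * n * q <= q ^ L.
  apply/leP; apply: INR_le.
  rewrite INR_expn !INR_muln (_ : INR 2 = 2%RR) //.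
  have e1 : ((INR q) ^ L = exp (INR L * ln (INR q)))%RR.
    by rewrite -ln_pow ?exp_ln //; [apply: pow_lt|]; lra.
  have e2 : (exp (r * ln (INR q)) = INR n * rho)%RR.
    have -> : (r * ln (INR q) = ln (INR n) + ln rho)%RR.
      by rewrite er Rmult_plus_distr_r erho et.
    by rewrite exp_plus !exp_ln //; lra.
  have h3 : (exp (r * ln (INR q)) <= exp (INR L * ln (INR q)))%RR.
    by apply: exp_le'; apply: Rmult_le_compat_r; [lra | rewrite INRL; lra].
  rewrite e1; apply: Rle_trans h3; rewrite e2; nra.
have cnt := count_ALL_lb q n L.
have bad : 2 * ((n - L) * (q ^ (n - L.+1) * (q * q))) <= q ^ n.
  case: (leqP n L) => hL.
    by rewrite (_ : n - L = 0) ?mul0n ?muln0 //; apply/eqP; rewrite subn_eq0.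
  have e1 : q ^ (n - L.+1) * (q * q) = q ^ (n - L) * q.
    rewrite mulnA -!expnSr; congr (_ ^ _); lia.
  rewrite e1.
  have eqn : q ^ n = q ^ L * q ^ (n - L) by rewrite -expnD subnKC // ltnW.
  rewrite eqn.
  set X := q ^ (n - L); set Y := q ^ L.
  have h4 := leq_mul qL (leqnn X).
  nia.
have T2 : q ^ n <= 2 * count (inALL q n L) (words q n) by lia.
have m0 : 0 < 2 * q - 1 by lia.
have [d1 [d2 [d3 [hd1 hd2 hd3 hcard]]]] := pigeon_C2 n m0 (prime_gt0 pp).
rewrite -/L in hd3 hcard.
exists d1, d2, d3; split; try lia.
set card := cardC2Aux q n p d1 d2 d3.
set M := ((q - 1) * L).+1.
have main : q ^ n <= card * (2 * ((2 * q - 1) * p * M)).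
  by apply: leq_trans T2 _; rewrite mulnCA leq_mul2l hcard orbT.
have main2 : q ^ n <= card * (2 * ((2 * q) * (18 * n) * M)).
  apply: leq_trans main _; rewrite leq_mul2l; apply/orP; right.
  rewrite leq_mul2l; apply/orP; right; rewrite leq_mul2r; apply/orP; right.
  apply: leq_mul => //; lia.
have cpos : 0 < card.
  case: (posnP card) main => // ->; rewrite mul0n leqn0 expn_eq0; lia.
have RM : (INR M <= 5 * INR q * rho)%RR.
  rewrite /M -addn1 INR_addn INR_muln minus_INR; last by lia.
  rewrite INRL /= .
  have hL' : (IZR (ceilZ r) <= 4 * rho)%RR by lra.
  have hL0 : (0 <= IZR (ceilZ r))%RR by apply: IZR_le.
  nra.
have Rmain := INR_leq main2.
rewrite INR_expn !INR_muln (_ : INR 2 = 2%RR) // (_ : INR 18 = 18%RR) in Rmain; last by rewrite INR_IZR_INZ.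
set C0 := INR (360 * q * q).
have eC0 : C0 = (360 * INR q * INR q)%RR.
  by rewrite /C0 !INR_muln (_ : INR 360 = 360%RR) // INR_IZR_INZ.
have cardR : (1 <= INR card)%RR by apply: (INR_leq cpos).
have Rmain2 : ((INR q) ^ n <= INR card * C0 * INR n * rho)%RR.
  apply: Rle_trans Rmain _.
  rewrite eC0.
  have hc := pos_INR card.
  have hM := pos_INR M.
  have : (2 * (2 * INR q * (18 * INR n) * INR M) <= 360 * INR q * INR q * INR n * rho)%RR.
    have : (0 <= 2 * INR q * (18 * INR n))%RR by nra.
    nra.
  move=> h; have := Rmult_le_compat_l _ _ _ hc h; lra.
have C0pos : (0 < C0)%RR by rewrite eC0; nra.
have Lmain : (INR n * ln (INR q) <= ln (INR card) + ln C0 + ln (INR n) + ln rho)%RR.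
  have cR : (0 < INR card)%RR by lra.
  have p1 : (0 < INR card * C0)%RR by nra.
  have p2 : (0 < INR card * C0 * INR n)%RR by nra.
  have rpos : (0 < rho)%RR by lra.
  rewrite -ln_pow; last lra.
  rewrite -(ln_mult _ _ cR C0pos) -(ln_mult _ _ p1 npos) -(ln_mult _ _ p2 rpos).
  apply: ln_le' => //; apply: pow_lt; lra.
rewrite er /redundancy /logq -/rho -/t.
apply: (Rmult_le_reg_r (ln (INR q))) => //.
have -> : ((INR n - ln (INR card) / ln (INR q)) * ln (INR q) =
           INR n * ln (INR q) - ln (INR card))%RR by field; lra.
have -> : ((rho + t + ln C0 / ln (INR q)) * ln (INR q) =
           ln (INR n) + ln rho + ln C0)%RR.
  by rewrite -erho -et; field; lra.
lra.
Qed.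

Theorem theorem13 :
  (forall (q n p d1 d2 d3 : nat),
     2 <= q -> 1 <= n -> least_prime_gt (4 * n) p ->
     d1 <= 2 * q - 2 -> d2 <= p - 1 -> d3 <= (q - 1) * Lpar q n ->
     forall x y : seq nat,
       inC2Aux q n p d1 d2 d3 x -> inC2Aux q n p d1 d2 d3 y -> x != y ->
       dH (Rvec x) (Rvec y) = 4 ->
       ~ (exists (u v w : seq nat) (t1 t2 a1 b1 a2 b2 : nat),
            [/\ qary q u, qary q v, qary q w & 1 <= size v] /\
            [/\ 1 <= t1, 1 <= t2 & [/\ a1 < q, b1 < q, a2 < q & b2 < q]] /\
            a1 != b1 /\ a2 != b2 /\
            x = u ++ alpha t1 a1 b1 ++ v ++ alpha t2 a2 b2 ++ w /\
            y = u ++ alpha t1 b1 a1 ++ v ++ alpha t2 b2 a2 ++ w))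
  /\
  (forall q : nat, 2 <= q ->
     exists (c : R) (N : nat), forall (n p : nat), N <= n ->
       least_prime_gt (4 * n) p ->
       exists d1 d2 d3 : nat,
         [/\ d1 <= 2 * q - 2, d2 <= p - 1, d3 <= (q - 1) * Lpar q n &
          Rle (redundancy q n (cardC2Aux q n p d1 d2 d3))
             (Rplus (Rplus (logq q (INR n)) (logq q (logq q (INR n)))) c)]).
Proof.
split; [exact: part1 | exact: part2].
Qed.
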